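(* For all positive integers $p,q$, \[ L_e(p,q) \geq \sum_{i=1}^{\frac{(p-1)(p-2)}{2}+1} M_p(i)\, N_e(q)^i\, N_s(q)^{\frac{p(p-1)}{2}-i}\, 2^{\frac{pq(q-1)}{2}}. \]
   Context: All graphs are simple undirected labeled graphs on the vertex set $\{1,\dots,n\}$. For such a graph with adjacency matrix $W$ and degree matrix $D$, its Laplacian is $L = D - W$; if the graph has at least one edge, its normalized Laplacian matrix is $\frac{1}{\mathrm{Tr}(L)}L$, which is a density matrix (Hermitian, positive semidefinite, trace $1$). An $n\times n$ density matrix $\rho$ with $n=pq$ is separable in $\mathbb{C}^p\otimes\mathbb{C}^q$ if $\rho=\sum_i c_i\,\rho_i\otimes\eta_i$ (finite sum) where the $\rho_i$ are $p\times p$ density matrices, the $\eta_i$ are $q\times q$ density matrices, $c_i\ge 0$ and $\sum_i c_i=1$; otherwise it is entangled. $L_s(p,q)$ denotes the number of labeled graphs on $n=pq$ vertices with at least one edge whose normalized Laplacian matrix is separable in $\mathbb{C}^p\otimes\mathbb{C}^q$, and $L_e(p,q)$ the number of those whose normalized Laplacian is entangled; thus $L_s(p,q)+L_e(p,q)=L(pq):=2^{pq(pq-1)/2}-1$. A square matrix is line sum symmetric if for each $i$ its $i$-th row sum equals its $i$-th column sum. $N_s(n)$ denotes the number of $n\times n$ matrices with entries in $\{0,1\}$ that are line sum symmetric, and $N_e(n)=2^{n^2}-N_s(n)$ the number of $n\times n$ $0$-$1$ matrices that are not line sum symmetric. For positive integers $n$ and nonnegative integers $i$, $M_n(i)$ denotes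 the number of symmetric $n\times n$ matrices with entries in $\{0,1\}$, all diagonal entries $0$, exactly $2i$ nonzero entries, and at least one row containing exactly one entry equal to $1$ (equivalently, the number of labeled graphs on $n$ vertices with $i$ edges having at least one vertex of degree $1$). *)

(* Defs.v *)
From HB Require Import structures.
From mathcomp Require Import all_boot all_order all_algebra.
From mathcomp Require Import algC.
From Stdlib Require Import ClassicalEpsilon.
Set Implicit Arguments. Unset Strict Implicit. Unset Printing Implicit Defensive.
Import Order.TTheory GRing.Theory Num.Theory.
Local Open Scope ring_scope.

Definition asbool (P : Prop) : bool :=
  if excluded_middle_informative P then true else false.

Definition adjmx m n (A : 'M[algC]_(m, n)) : 'M[algC]_(n, m) :=
  map_mx (fun x => x^*) A^T.

Definition density_matrix n (A : 'M[algC]_n) : Prop :=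
  [/\ adjmx A = A,
      (forall v : 'cV[algC]_n, 0 <= (adjmx v *m A *m v) 0 0)
    & \tr A = 1].

(* index k of C^{pq} = C^p (x) C^q corresponds to the pair (k / q, k mod q) *)
Lemma idx_div_lt p q (k : 'I_(p * q)) : (k %/ q < p)%N.
Proof.
case: q k => [|q] k; first by case: k => k; rewrite muln0.
by rewrite ltn_divLR.
Qed.

Lemma idx_mod_lt p q (k : 'I_(p * q)) : (k %% q < q)%N.
Proof.
case: q k => [|q] k; first by case: k => k; rewrite muln0.
by rewrite ltn_mod.
Qed.

Definition idx1 p q (k : 'I_(p * q)) : 'I_p := Ordinal (idx_div_lt k).
Definition idx2 p q (k : 'I_(p * q)) : 'I_q := Ordinal (idx_mod_lt k).

Definition kronmx p q (A : 'M[algC]_p) (B : 'M[algC]_q) : 'M[algC]_(p * q) :=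
  \matrix_(k, l) (A (idx1 k) (idx1 l) * B (idx2 k) (idx2 l)).

Definition separable p q (rho : 'M[algC]_(p * q)) : Prop :=
  exists (m : nat) (c : 'I_m -> algC) (r : 'I_m -> 'M[algC]_p)
         (e : 'I_m -> 'M[algC]_q),
    [/\ forall i, 0 <= c i,
        \sum_(i < m) c i = 1,
        forall i, density_matrix (r i),
        forall i, density_matrix (e i)
      & rho = \sum_(i < m) c i *: kronmx (r i) (e i)].

(* simple graphs on {1..n} (here 'I_n) via 0-1 adjacency matrices *)
Definition is_graph n (W : 'M[bool]_n) : bool :=
  [forall i, forall j, W i j == W j i] && [forall i, ~~ W i i].

Definition has_edge n (W : 'M[bool]_n) : bool := [exists i, exists j, W i j].

Definition laplacian n (W : 'M[bool]_n) : 'M[algC]_n :=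
  \matrix_(i, j) ((i == j)%:R * (\sum_(k < n) (W i k)%:R) - (W i j)%:R).

Definition norm_laplacian n (W : 'M[bool]_n) : 'M[algC]_n :=
  (\tr (laplacian W))^-1 *: laplacian W.

Definition L_s p q : nat :=
  #|[set W : 'M[bool]_(p * q) | [&& is_graph W, has_edge W &
        asbool (@separable p q (norm_laplacian W))]]|.
Definition L_e p q : nat :=
  #|[set W : 'M[bool]_(p * q) | [&& is_graph W, has_edge W &
        asbool (~ @separable p q (norm_laplacian W))]]|.

Definition line_sum_symmetric n (A : 'M[bool]_n) : bool :=
  [forall i, (\sum_(j < n) (A i j : nat) == \sum_(j < n) (A j i : nat))%N].

Definition N_s n : nat := #|[set A : 'M[bool]_n | line_sum_symmetric A]|.
Definition N_e n : nat := (2 ^ (n * n) - N_s n)%N.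

Definition M_ n i : nat :=
  #|[set W : 'M[bool]_n | [&& is_graph W,
       (\sum_(a < n) \sum_(b < n) (W a b : nat) == 2 * i)%N &
       [exists a, (\sum_(b < n) (W a b : nat) == 1)%N]]]|.

(* Main.v *)
Require Import Defs.
From HB Require Import structures.
From mathcomp Require Import all_boot all_order all_algebra.
From mathcomp Require Import algC zify ring.
From Stdlib Require Import ClassicalEpsilon.
Set Implicit Arguments. Unset Strict Implicit. Unset Printing Implicit Defensive.
Import Order.TTheory GRing.Theory Num.Theory.

Section Analytic.
Local Open Scope ring_scope.

Lemma conj_sum (I : finType) (F : I -> algC) : (\sum_i F i)^* = \sum_i (F i)^*.
Proof. exact: rmorph_sum. Qed.
Lemma conj_mul (x y : algC) : (x * y)^* = x^* * y^*.
Proof. exact: rmorphM. Qed.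

Lemma qform n (A : 'M[algC]_n) (v w : 'cV_n) :
  (adjmx w *m A *m v) 0 0 = \sum_i \sum_j (w i 0)^* * A i j * v j 0.
Proof.
rewrite mxE exchange_big /=; apply: eq_bigr => j _.
rewrite mxE big_distrl /=; apply: eq_bigr => i _.
by rewrite !mxE.
Qed.

Lemma herm_entry n (A : 'M[algC]_n) : adjmx A = A -> forall i j, A j i = (A i j)^*.
Proof. by move=> hA i j; rewrite -{1}hA !mxE. Qed.

Lemma adjmxD m n (v w : 'M[algC]_(m, n)) : adjmx (v + w) = adjmx v + adjmx w.
Proof. by apply/matrixP => i j; rewrite !mxE rmorphD. Qed.

Lemma adjmxZ m n t (v : 'M[algC]_(m, n)) : adjmx (t *: v) = t^* *: adjmx v.
Proof. by apply/matrixP => i j; rewrite !mxE rmorphM. Qed.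

Lemma psd_zero n (A : 'M[algC]_n) (v w : 'cV_n) : density_matrix A ->
  (adjmx v *m A *m v) 0 0 = 0 -> (adjmx w *m A *m v) 0 0 = 0.
Proof.
case=> hH hP _ hX.
set Z := (adjmx w *m A *m v) 0 0.
set Q := (adjmx w *m A *m w) 0 0.
have hY : (adjmx v *m A *m w) 0 0 = Z^*.
  rewrite /Z !qform conj_sum exchange_big /=; apply: eq_bigr => i _.
  rewrite conj_sum; apply: eq_bigr => j _.
  rewrite !conj_mul /= conjCK (herm_entry hH i j); ring.
have hQ : 0 <= Q by apply: hP.
have expand t : (adjmx (v + t *: w) *m A *m (v + t *: w)) 0 0 =
    t * Z^* + t^* * Z + t^* * t * Q.
  rewrite adjmxD adjmxZ !mulmxDl !mulmxDr -!scalemxAl -!scalemxAr !mxE.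
  move: hX hY; rewrite /Z /Q !mxE => -> ->; ring.
have := hP (v + (- Z / (Q + 1)) *: w); rewrite expand.
have hQ1 : Q + 1 != 0 by rewrite lt0r_neq0 // ltr_wpDl.
have hQ2 : Q + 2 != 0 by rewrite lt0r_neq0 // ltr_wpDl.
rewrite rmorphM rmorphN /= fmorphV rmorphD rmorph1 /= (geC0_conj hQ).
have -> : - Z / (Q + 1) * Z^* + - Z^* / (Q + 1) * Z + - Z^* / (Q + 1) * (- Z / (Q + 1)) * Q
   = - ((Z * Z^*) * (Q + 2) / (Q + 1) ^+ 2) by field.
rewrite oppr_ge0 => hle.
have hge : 0 <= (Z * Z^*) * (Q + 2) / (Q + 1) ^+ 2.
  have hN : 0 <= Z * Z^* by rewrite -normCK exprn_ge0.
  by apply: divr_ge0; [apply: mulr_ge0 => //; apply: addr_ge0 | apply: exprn_ge0; apply: addr_ge0].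
have /eqP : Z * Z^* * (Q + 2) / (Q + 1) ^+ 2 = 0 by apply/eqP; rewrite eq_le hle hge.
by rewrite !mulf_eq0 invr_eq0 expf_eq0 (negPf hQ1) (negPf hQ2) conjC_eq0 !orbF orbb => /eqP.
Qed.
Lemma pr_lt p q (a : 'I_p) (y : 'I_q) : (a * q + y < p * q)%N.
Proof.
have ha := ltn_ord a; have hy := ltn_ord y.
have : (a.+1 * q <= p * q)%N by rewrite leq_mul2r ha orbT.
rewrite mulSn; lia.
Qed.

Definition pr p q (a : 'I_p) (y : 'I_q) : 'I_(p * q) := Ordinal (pr_lt a y).

Lemma idx1_pr p q a y : idx1 (@pr p q a y) = a.
Proof.
apply: val_inj => /=; have hy := ltn_ord y.
rewrite divnMDl ?divn_small ?addn0 //; lia.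
Qed.

Lemma idx2_pr p q a y : idx2 (@pr p q a y) = y.
Proof.
apply: val_inj => /=; rewrite modnMDl modn_small //; exact: ltn_ord.
Qed.

Lemma pr_idx p q (k : 'I_(p * q)) : pr (idx1 k) (idx2 k) = k.
Proof. by apply: val_inj => /=; rewrite -divn_eq. Qed.

Lemma pr_eq p q (a b : 'I_p) (x y : 'I_q) : (pr a x == pr b y) = (a == b) && (x == y).
Proof.
apply/eqP/andP => [h|[/eqP-> /eqP->]] //.
by split; apply/eqP; [rewrite -(idx1_pr a x) h idx1_pr | rewrite -(idx2_pr a x) h idx2_pr].
Qed.

Lemma sum_pr (R : nmodType) p q (f : 'I_(p * q) -> R) :
  (\sum_k f k = \sum_a \sum_y f (pr a y))%R.
Proof.
rewrite pair_bigA /=.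
rewrite (reindex (fun ab : 'I_p * 'I_q => pr ab.1 ab.2)) //.
exists (fun k => (idx1 k, idx2 k)) => [[a y] _|k _] /=; first by rewrite idx1_pr idx2_pr.
exact: pr_idx.
Qed.

Lemma rho_entry p q m (c : 'I_m -> algC) (r : 'I_m -> 'M[algC]_p) (e : 'I_m -> 'M[algC]_q)
  a b x y :
  (\sum_(i < m) c i *: kronmx (r i) (e i)) (pr a x) (pr b y) =
  \sum_i c i * (r i a b * e i x y).
Proof.
rewrite summxE; apply: eq_bigr => i _.
by rewrite !mxE !idx1_pr !idx2_pr.
Qed.

Lemma qform_one n (A : 'M[algC]_n) :
  (adjmx (const_mx 1 : 'cV_n) *m A *m (const_mx 1 : 'cV_n)) 0 0 = \sum_a \sum_b A a b.
Proof.
rewrite qform; apply: eq_bigr => a _; apply: eq_bigr => b _.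
by rewrite !mxE rmorph1 mul1r mulr1.
Qed.

Lemma qform_delta n (A : 'M[algC]_n) a :
  (adjmx (@delta_mx _ n 1 a 0) *m A *m (const_mx 1 : 'cV_n)) 0 0 = \sum_b A a b.
Proof.
rewrite qform (bigD1 a) //= [X in _ + X]big1 ?addr0.
  by apply: eq_bigr => b _; rewrite !mxE !eqxx /= rmorph1 mul1r mulr1.
move=> i /negPf hi; apply: big1 => j _.
by rewrite !mxE hi /= rmorph0 !mul0r.
Qed.

Lemma dens_rows n (A : 'M[algC]_n) : density_matrix A ->
  \sum_a \sum_b A a b = 0 -> forall a, \sum_b A a b = 0.
Proof.
move=> hA h0 a; rewrite -qform_delta; apply: psd_zero => //.
by rewrite qform_one.
Qed.

Lemma dens_tot_ge0 n (A : 'M[algC]_n) : density_matrix A -> 0 <= \sum_a \sum_b A a b.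
Proof. by case=> _ hP _; rewrite -qform_one; apply: hP. Qed.

Lemma sum3 (I J K : finType) (F : I -> J -> K -> algC) :
  \sum_a \sum_x \sum_i F i a x = \sum_i \sum_a \sum_x F i a x.
Proof.
under eq_bigr do rewrite exchange_big.
by rewrite exchange_big.
Qed.

Lemma sep_crit p q (rho : 'M[algC]_(p * q)) : separable rho ->
  (forall k, \sum_l rho k l = 0) ->
  forall a x, \sum_b \sum_y rho (pr a y) (pr b x) = 0.
Proof.
case=> m [c [r [e [hc _ hr he ->]]]] hrow0.
set R := fun i a => \sum_b r i a b.
set E := fun i x => \sum_y e i x y.
have hsum a x : \sum_b \sum_y (\sum_(i < m) c i *: kronmx (r i) (e i)) (pr a x) (pr b y)
    = \sum_i c i * (R i a * E i x).
  under eq_bigr do under eq_bigr do rewrite rho_entry.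
  under eq_bigr do rewrite exchange_big /=.
  rewrite exchange_big /=; apply: eq_bigr => i _.
  rewrite /R /E big_distrl big_distrr /=; apply: eq_bigr => b _.
  rewrite big_distrr big_distrr /=; apply: eq_bigr => y _; ring.
have hrow a x : \sum_i c i * (R i a * E i x) = 0.
  by rewrite -hsum -sum_pr hrow0.
have htot : \sum_i c i * ((\sum_a R i a) * (\sum_x E i x)) = 0.
  transitivity (\sum_a \sum_x \sum_i c i * (R i a * E i x)).
    rewrite sum3; apply: eq_bigr => i _.
    rewrite big_distrl big_distrr; apply: eq_bigr => a _.
    rewrite big_distrr big_distrr; apply: eq_bigr => x _ /=; ring.
  by apply: big1 => a _; apply: big1 => x _; apply: hrow.
have hge i : 0 <= c i * ((\sum_a R i a) * (\sum_x E i x)).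
  by rewrite mulr_ge0 ?mulr_ge0 // ?dens_tot_ge0.
have hz := psumr_eq0P (fun i _ => hge i) htot.
move=> a x.
transitivity (\sum_i c i * (R i a * (E i x)^*)).
  under eq_bigr do under eq_bigr do rewrite rho_entry.
  rewrite sum3; apply: eq_bigr => i _.
  have hE : (E i x)^* = \sum_y e i y x.
    rewrite /E conj_sum; apply: eq_bigr => y _.
    by case: (he i) => hH _ _; rewrite (herm_entry hH x y).
  rewrite hE /R big_distrl big_distrr; apply: eq_bigr => b _.
  rewrite big_distrr big_distrr; apply: eq_bigr => y _ /=; ring.
apply: big1 => i _.
have /eqP := hz i isT; rewrite !mulf_eq0 => /orP[/eqP->|/orP[]/eqP h]; first by rewrite mul0r.
  by rewrite /R (dens_rows (hr i) h a) mul0r mulr0.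
by rewrite /E (dens_rows (he i) h x) conjC0 !mulr0.
Qed.

Definition deg n (W : 'M[bool]_n) k : algC := \sum_j (W k j : nat)%:R.

Lemma delta_sum n (k : 'I_n) (c : algC) : \sum_l (k == l)%:R * c = c.
Proof.
rewrite (bigD1 k) //= eqxx mul1r big1 ?addr0 //.
by move=> l /negPf hl; rewrite eq_sym hl mul0r.
Qed.

Lemma lap_row n (W : 'M[bool]_n) k : \sum_l laplacian W k l = 0.
Proof.
under eq_bigr do rewrite mxE.
by rewrite sumrB delta_sum subrr.
Qed.

Lemma lap_tr n (W : 'M[bool]_n) : is_graph W -> \tr (laplacian W) = (\sum_k \sum_j (W k j : nat))%:R.
Proof.
case/andP=> _ /forallP hirr.
rewrite /mxtrace natr_sum; apply: eq_bigr => k _.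
rewrite mxE eqxx mul1r natr_sum (negPf (hirr k)) subr0; done.
Qed.

Lemma natr_sum2 (I J : finType) (F : I -> J -> nat) :
  ((\sum_i \sum_j F i j)%N)%:R = \sum_i \sum_j (F i j)%:R :> algC.
Proof. by rewrite natr_sum; apply: eq_bigr => i _; rewrite natr_sum. Qed.

Lemma graph_crit p q (W : 'M[bool]_(p * q)) : is_graph W -> has_edge W ->
  separable (norm_laplacian W) ->
  forall a x, (\sum_b \sum_y (W (pr a y) (pr b x) : nat) =
               \sum_b \sum_y (W (pr a x) (pr b y) : nat))%N.
Proof.
move=> hg he hs a x.
have ht : \tr (laplacian W) != 0.
  rewrite lap_tr // pnatr_eq0 -lt0n.
  case/existsP: he => i /existsP [j hij].
  rewrite (bigD1 i) //= (bigD1 j) //= hij; lia.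
have hrow k : \sum_l norm_laplacian W k l = 0.
  under eq_bigr do rewrite mxE.
  by rewrite -mulr_sumr lap_row mulr0.
have h0 := sep_crit hs hrow a x.
have h1 : \sum_b \sum_y laplacian W (pr a y) (pr b x) = 0.
  move: h0; rewrite /norm_laplacian.
  under eq_bigr do under eq_bigr do rewrite mxE.
  under eq_bigr do rewrite -mulr_sumr.
  rewrite -mulr_sumr => /eqP; rewrite mulf_eq0 invr_eq0 (negPf ht) /= => /eqP //.
have hd : \sum_b \sum_y ((pr a y == pr b x)%:R * deg W (pr a y)) = deg W (pr a x).
  rewrite (bigD1 a) //= [X in _ + X]big1 ?addr0.
    rewrite (bigD1 x) //= pr_eq !eqxx mul1r [X in _ + X]big1 ?addr0 //.
    by move=> y /negPf hy; rewrite pr_eq eqxx hy mul0r.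
  by move=> b /negPf hb; apply: big1 => y _; rewrite pr_eq eq_sym hb mul0r.
have h2 : \sum_b \sum_y laplacian W (pr a y) (pr b x) =
    deg W (pr a x) - \sum_b \sum_y (W (pr a y) (pr b x) : nat)%:R.
  rewrite -hd -sumrB; apply: eq_bigr => b _; rewrite -sumrB; apply: eq_bigr => y _.
  by rewrite mxE.
have h3 : deg W (pr a x) = \sum_b \sum_y (W (pr a x) (pr b y) : nat)%:R.
  by rewrite /deg sum_pr.
move: h1; rewrite h2 h3 => /eqP; rewrite subr_eq0 -!natr_sum2 eqr_nat => /eqP //.
Qed.

End Analytic.

Lemma card_fam (aT rT : finType) (F : aT -> {set rT}) :
  #|family F| = \prod_x #|F x|.
Proof. rewrite card_family /image_mem foldr_map.
have -> : \prod_x #|F x| = \prod_(x <- enum aT) #|F x| by rewrite big_enum.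
by elim: (enum aT) => [|x s IH]; rewrite ?big_nil ?big_cons //= IH.
Qed.

Lemma cardP (T : finType) (P : pred T) : #|[set x | P x]| = \sum_x (P x : nat).
Proof. by rewrite -sum1dep_card big_mkcond. Qed.

Lemma prod_const_cond (T : finType) (P : pred T) c :
  \prod_(x | P x) c = c ^ #|[set x | P x]|.
Proof. by rewrite -prod_nat_const; apply: eq_bigl => x; rewrite inE. Qed.

Definition swp n (ab : 'I_n * 'I_n) := (ab.2, ab.1).
Lemma swpK n : involutive (@swp n). Proof. by case. Qed.

Lemma sum_swap n (F : 'I_n * 'I_n -> nat) : \sum_ab F (swp ab) = \sum_ab F ab.
Proof. by rewrite [RHS](reindex_inj (inv_inj (@swpK n))). Qed.

Lemma sum_diag n (F : 'I_n -> 'I_n -> bool) :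
  \sum_(ab : 'I_n * 'I_n) ((ab.1 == ab.2) && F ab.1 ab.2 : nat) = \sum_a (F a a : nat).
Proof.
rewrite -(pair_bigA _ (fun a b => ((a == b) && F a b : nat))) /=.
apply: eq_bigr => a _; rewrite (bigD1 a) //= eqxx big1 ?addn0 //.
by move=> b /negPf; rewrite eq_sym => ->.
Qed.

Lemma trich n (a b : 'I_n) : ((a < b)%N : nat) + ((b < a)%N : nat) + ((a == b) : nat) = 1.
Proof. have -> : (a == b) = (nat_of_ord a == b) by []. by case: ltngtP. Qed.

Lemma card_lt n : #|[set ab : 'I_n * 'I_n | (ab.1 < ab.2)%N]| = n * n.-1 %/ 2.
Proof.
rewrite cardP.
have h1 : \sum_(ab : 'I_n * 'I_n) ((ab.2 < ab.1)%N : nat) = \sum_(ab : 'I_n * 'I_n) ((ab.1 < ab.2)%N : nat).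
  by rewrite -sum_swap.
have h2 : \sum_(ab : 'I_n * 'I_n) ((ab.1 == ab.2) : nat) = n.
  rewrite -(pair_bigA _ (fun a b => ((a == b) : nat))) /=.
  rewrite -[RHS](card_ord n) -sum1_card; apply: eq_bigr => a _.
  rewrite (bigD1 a) //= eqxx big1 ?addn0 //.
  by move=> b /negPf; rewrite eq_sym => ->.
have h3 : \sum_(ab : 'I_n * 'I_n) (((ab.1 < ab.2)%N : nat) + ((ab.2 < ab.1)%N : nat) + ((ab.1 == ab.2) : nat)) = n * n.
  under eq_bigr do rewrite trich.
  by rewrite sum1_card card_prod card_ord.
rewrite !big_split /= h1 h2 in h3.
set S := \sum_ab _ in h3 *.
have : S * 2 = n * n.-1.
  clearbody S; clear h1 h2; case: n S h3 => [|n] S h3 /=; [lia|].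
  rewrite mulnS in h3; lia.
by move=> <-; rewrite mulnK.
Qed.

Lemma card_ltH n (H : 'M[bool]_n) i : is_graph H ->
  (\sum_a \sum_b (H a b : nat) = 2 * i)%N ->
  #|[set ab : 'I_n * 'I_n | (ab.1 < ab.2)%N && H ab.1 ab.2]| = i /\
  #|[set ab : 'I_n * 'I_n | (ab.1 < ab.2)%N && ~~ H ab.1 ab.2]| = n * n.-1 %/ 2 - i.
Proof.
case/andP=> /forallP hs /forallP hirr hsum.
have hsym a b : H a b = H b a by apply/eqP; have /forallP := hs a; apply.
have h1 : \sum_(ab : 'I_n * 'I_n) ((ab.2 < ab.1)%N && H ab.1 ab.2 : nat) =
          \sum_(ab : 'I_n * 'I_n) ((ab.1 < ab.2)%N && H ab.1 ab.2 : nat).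
  rewrite -sum_swap; apply: eq_bigr => [[a b]] _ /=; by rewrite hsym.
have h2 : \sum_(ab : 'I_n * 'I_n) ((ab.1 == ab.2) && H ab.1 ab.2 : nat) = 0.
  by rewrite sum_diag big1 // => a _; rewrite (negPf (hirr a)).
have h3 : \sum_(ab : 'I_n * 'I_n) (((ab.1 < ab.2)%N && H ab.1 ab.2 : nat) +
     ((ab.2 < ab.1)%N && H ab.1 ab.2 : nat) + ((ab.1 == ab.2) && H ab.1 ab.2 : nat)) = 2 * i.
  rewrite -hsum pair_bigA; apply: eq_bigr => [[a b]] _ /=.
  by case: (H a b); rewrite ?andbT ?andbF ?trich.
rewrite !big_split /= h1 h2 addn0 in h3.
have hi : #|[set ab : 'I_n * 'I_n | (ab.1 < ab.2)%N && H ab.1 ab.2]| = i.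
  rewrite cardP; apply/eqP; rewrite -(eqn_pmul2l (_ : 0 < 2)) // -h3 mul2n -addnn; exact: eqxx.
split => //.
rewrite -card_lt -hi !cardP.
have h4 : \sum_(ab : 'I_n * 'I_n) ((ab.1 < ab.2)%N : nat) =
  \sum_(ab : 'I_n * 'I_n) ((ab.1 < ab.2)%N && H ab.1 ab.2 : nat) +
  \sum_(ab : 'I_n * 'I_n) ((ab.1 < ab.2)%N && ~~ H ab.1 ab.2 : nat).
  rewrite -big_split; apply: eq_bigr => ab _ /=; by case: (H _ _); rewrite ?andbT ?andbF ?addn0.
by rewrite h4 addKn.
Qed.

Definition UT q := [set B : 'M[bool]_q | [forall x, forall y, B x y ==> (x < y)%N]].

Lemma card_UT q : #|UT q| = 2 ^ (q * q.-1 %/ 2).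
Proof.
pose G (xy : 'I_q * 'I_q) : {set bool} := if (xy.1 < xy.2)%N then setT else [set false].
have -> : UT q = (@Matrix bool q q) @: [set f | f \in family G].
  apply/setP => B; rewrite inE; apply/idP/imsetP.
    move=> /forallP hB; exists (mx_val B); last by case: B {hB}.
    rewrite inE; apply/familyP => [[x y]]; rewrite /G /= -[mx_val B (x, y)]/(B x y).
    have /forallP/(_ y) := hB x; case: ifP => _; rewrite ?inE //.
    by rewrite implybF => /negPf ->.
  move=> [f]; rewrite inE => /familyP hf ->; apply/forallP => x; apply/forallP => y.
  have := hf (x, y); rewrite /G /=; case: ifP => hxy; first by rewrite implybT.
  by rewrite inE => /eqP h; rewrite /fun_of_matrix /= h.
rewrite card_imset; last by move=> f g [].
rewrite cardsE card_fam.
rewrite (bigID (fun xy : 'I_q * 'I_q => (xy.1 < xy.2)%N)) /=.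
rewrite [X in _ * X]big1 ?muln1; last by move=> xy /negPf h; rewrite /G h cards1.
under eq_bigr => xy h do rewrite /G h cardsT card_bool.
by rewrite prod_const_cond card_lt.
Qed.

Definition LS q := [set B : 'M[bool]_q | line_sum_symmetric B].

Definition Fam p q (H : 'M[bool]_p) (ab : 'I_p * 'I_p) : {set 'M[bool]_q} :=
  if (ab.1 < ab.2)%N then (if H ab.1 ab.2 then ~: LS q else LS q)
  else if (ab.2 < ab.1)%N then [set const_mx false] else UT q.

Lemma card_nLS q : #|~: LS q| = N_e q.
Proof.
rewrite /N_e cardsCs setCK /N_s /LS.
have -> : #|'M[bool]_q| = 2 ^ (q * q) by rewrite card_mx card_bool.
by [].
Qed.

Lemma card_FamH p q (H : 'M[bool]_p) i : is_graph H ->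
  (\sum_a \sum_b (H a b : nat) = 2 * i)%N ->
  #|family (Fam q H)| = N_e q ^ i * N_s q ^ (p * p.-1 %/ 2 - i) * 2 ^ (p * q * q.-1 %/ 2).
Proof.
move=> hg hs; have [hi hni] := card_ltH hg hs.
rewrite card_fam (bigID (fun ab : 'I_p * 'I_p => (ab.1 < ab.2)%N)) /=.
rewrite (bigID (fun ab : 'I_p * 'I_p => H ab.1 ab.2)) /=.
rewrite (eq_bigr (fun _ => N_e q)); last first.
  by move=> [a b] /andP[/= h1 h2]; rewrite /Fam /= h1 h2 card_nLS.
rewrite [X in _ * X * _](eq_bigr (fun _ => N_s q)); last first.
  by move=> [a b] /andP[/= h1 /negPf h2]; rewrite /Fam /= h1 h2.
rewrite !prod_const_cond hi hni.
rewrite (bigID (fun ab : 'I_p * 'I_p => (ab.2 < ab.1)%N)) /=.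
rewrite big1 ?mul1n; last first.
  by move=> [a b] /andP[/= /negPf h1 h2]; rewrite /Fam /= h1 h2 cards1.
rewrite (eq_bigr (fun _ => 2 ^ (q * q.-1 %/ 2))); last first.
  by move=> [a b] /andP[/= /negPf h1 /negPf h2]; rewrite /Fam /= h1 h2 card_UT.
rewrite prod_const_cond.
have -> : #|[set ab : 'I_p * 'I_p | ~~ (ab.1 < ab.2)%N && ~~ (ab.2 < ab.1)%N]| = p.
  rewrite cardP (eq_bigr (fun ab : 'I_p * 'I_p => ((ab.1 == ab.2) && (fun _ _ => true) ab.1 ab.2 : nat))).
    by rewrite (sum_diag (fun _ _ => true)) /= sum_nat_const card_ord muln1.
  move=> [a b] _ /=; rewrite andbT -[(a == b)]/(nat_of_ord a == b).
  by case: ltngtP.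
rewrite -expnM; congr (_ * 2 ^ _).
have h2 : 2 %| q * q.-1.
  case: q {hi hni} => [|q] //=; rewrite dvdn2 oddM /=; by case: (odd q).
by rewrite mulnC -mulnA muln_divA.
Qed.


Definition symc q (B : 'M[bool]_q) : 'M[bool]_q := \matrix_(x, y) (B x y || B y x).

Definition blk p q (F : {ffun 'I_p * 'I_p -> 'M[bool]_q}) (a b : 'I_p) : 'M[bool]_q :=
  if (a < b)%N then F (a, b) else if (b < a)%N then trmx (F (b, a)) else symc (F (a, a)).

Definition Phi p q (F : {ffun 'I_p * 'I_p -> 'M[bool]_q}) : 'M[bool]_(p * q) :=
  \matrix_(k, l) blk F (idx1 k) (idx1 l) (idx2 k) (idx2 l).

Lemma Phi_pr p q F (a b : 'I_p) (x y : 'I_q) : Phi F (pr a x) (pr b y) = blk F a b x y.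
Proof. by rewrite mxE !idx1_pr !idx2_pr. Qed.

Lemma ord_eq n (a b : 'I_n) : ~~ (a < b)%N -> ~~ (b < a)%N -> a = b.
Proof. move=> h1 h2; apply: val_inj => /=; lia. Qed.

Lemma blk_sym p q F (a b : 'I_p) (x y : 'I_q) : blk F a b x y = blk F b a y x.
Proof.
rewrite /blk; case: (ltnP a b) => h1.
  by rewrite ltnNge (ltnW h1) /= mxE.
case: (ltnP b a) => h2; first by rewrite mxE.
have e : a = b by apply: ord_eq; rewrite -leqNgt.
by subst b; rewrite !mxE orbC.
Qed.

Lemma UT_diag q (B : 'M[bool]_q) x : B \in UT q -> B x x = false.
Proof. by rewrite inE => /forallP/(_ x)/forallP/(_ x); rewrite ltnn implybF => /negPf. Qed.

Lemma Phi_graph p q (H : 'M[bool]_p) F : F \in family (Fam q H) -> is_graph (Phi F).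
Proof.
move=> /familyP hF; apply/andP; split.
  apply/forallP => k; apply/forallP => l; apply/eqP.
  by rewrite -(pr_idx k) -(pr_idx l) !Phi_pr blk_sym.
apply/forallP => k; rewrite -(pr_idx k) Phi_pr /blk ltnn /= mxE.
have := hF (idx1 k, idx1 k); rewrite /Fam /= ltnn /= => hU.
by rewrite (UT_diag _ hU).
Qed.

Definition rs q (B : 'M[bool]_q) x := (\sum_y (B x y : nat))%N.
Definition cs q (B : 'M[bool]_q) x := (\sum_y (B y x : nat))%N.

Lemma lssP q (B : 'M[bool]_q) : line_sum_symmetric B = [forall x, rs B x == cs B x].
Proof. by []. Qed.

Lemma lss_tr q (B : 'M[bool]_q) : line_sum_symmetric (trmx B) = line_sum_symmetric B.
Proof.
rewrite !lssP; apply: eq_forallb => x; rewrite eq_sym /rs /cs.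
by congr (_ == _); apply: eq_bigr => y _; rewrite mxE.
Qed.

Lemma lss_symc q (B : 'M[bool]_q) : line_sum_symmetric (symc B).
Proof.
rewrite lssP; apply/forallP => x; apply/eqP; rewrite /rs /cs.
by apply: eq_bigr => y _; rewrite !mxE orbC.
Qed.

Lemma blk_lss p q (H : 'M[bool]_p) F (a b : 'I_p) : is_graph H ->
  F \in family (Fam q H) -> line_sum_symmetric (blk F a b) = ~~ H a b.
Proof.
case/andP=> /forallP hs /forallP hirr /familyP hF.
have hsym u v : H u v = H v u by apply/eqP; have /forallP := hs u; apply.
rewrite /blk; case: (ltnP a b) => h1.
  have := hF (a, b); rewrite /Fam /= h1; case: (H a b); rewrite !inE //.
  by move=> /negPf ->.
case: (ltnP b a) => h2.
  have := hF (b, a); rewrite /Fam /= h2 lss_tr hsym; case: (H a b); rewrite !inE //.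
  by move=> /negPf ->.
have e : a = b by apply: ord_eq; lia.
by subst b; rewrite lss_symc (negPf (hirr a)).
Qed.

Lemma witness p q (H : 'M[bool]_p) F : is_graph H ->
  [exists a, (\sum_b (H a b : nat) == 1)%N] -> F \in family (Fam q H) ->
  exists a x, (\sum_b cs (blk F a b) x != \sum_b rs (blk F a b) x)%N.
Proof.
move=> hg /existsP [a ha] hF.
have : #|[set b | H a b]| == 1 by rewrite cardP.
case/cards1P => c hc.
have hb b : H a b = (b == c) by rewrite -in_set1 -hc inE.
have /forallPn [x hx] : ~~ line_sum_symmetric (blk F a c) by rewrite (blk_lss a c hg hF) hb eqxx.
exists a, x.
rewrite (bigD1 c) //= [X in _ != X](bigD1 c) //=.
rewrite (eq_bigr (fun b => rs (blk F a b) x)); last first.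
  move=> b hbc; have := blk_lss a b hg hF; rewrite hb (negPf hbc) /= lssP.
  by move=> /forallP/(_ x)/eqP ->.
by rewrite eqn_add2r eq_sym.
Qed.

Lemma UT_ent q (B : 'M[bool]_q) (x y : 'I_q) : B \in UT q -> ~~ (x < y)%N -> B x y = false.
Proof.
rewrite inE => /forallP/(_ x)/forallP/(_ y) h hxy; apply/negP => hB.
by move: h; rewrite hB (negPf hxy).
Qed.

Lemma Phi_inj p q (H1 H2 : 'M[bool]_p) F1 F2 : is_graph H1 -> is_graph H2 ->
  F1 \in family (Fam q H1) -> F2 \in family (Fam q H2) -> Phi F1 = Phi F2 ->
  F1 = F2 /\ H1 = H2.
Proof.
move=> hg1 hg2 hF1 hF2 e.
have hblk a b x y : blk F1 a b x y = blk F2 a b x y by rewrite -!Phi_pr e.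
have eF : F1 = F2.
  have /familyP hF1' := hF1; have /familyP hF2' := hF2.
  apply/ffunP => [[a b]]; apply/matrixP => x y.
  have := hblk a b x y; rewrite /blk.
  case: (ltnP a b) => h1 //.
  case: (ltnP b a) => h2.
    have := hF1' (a, b); have := hF2' (a, b); rewrite /Fam /= ltnNge h1 /= h2 !inE.
    by move=> /eqP -> /eqP ->.
  have ea : a = b by apply: ord_eq; lia.
  subst b; rewrite !mxE.
  have := hF1' (a, a); have := hF2' (a, a); rewrite /Fam /= ltnn /= => hU2 hU1.
  case: (ltnP x y) => hxy.
    have n1 : ~~ (y < x)%N by lia.
    by rewrite (UT_ent hU1 n1) (UT_ent hU2 n1) !orbF.
  have n1 : ~~ (x < y)%N by lia.
  by rewrite (UT_ent hU1 n1) (UT_ent hU2 n1).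
split => //; apply/matrixP => a b.
have := blk_lss a b hg1 hF1; have := blk_lss a b hg2 hF2; rewrite eF => -> h.
by apply: negb_inj.
Qed.


Lemma sum_triple (T1 T2 T3 : finType) (F : T1 * T2 * T3 -> nat) :
  (\sum_t F t = \sum_a \sum_b \sum_c F ((a, b), c))%N.
Proof.
transitivity (\sum_(t : T1 * T2 * T3) F ((t.1.1, t.1.2), t.2)).
  by apply: eq_bigr => [[[a b] c]].
by rewrite [RHS]pair_bigA /= [RHS]pair_bigA.
Qed.

Lemma sum_mem (T : finType) (A : pred T) : (\sum_x (x \in A : nat) = #|A|)%N.
Proof. rewrite -sum1_card [RHS]big_mkcond; apply: eq_bigr => x _; by case: (x \in A). Qed.

Lemma entangled p q (H : 'M[bool]_p) F : is_graph H ->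
  [exists a, (\sum_b (H a b : nat) == 1)%N] -> F \in family (Fam q H) ->
  [&& is_graph (Phi F), has_edge (Phi F) & asbool (~ @separable p q (norm_laplacian (Phi F)))].
Proof.
move=> hg hex hF.
have hG := Phi_graph hF.
have [a [x hne]] := witness hg hex hF.
have e1 : (\sum_b \sum_y (Phi F (pr a y) (pr b x) : nat) = \sum_b cs (blk F a b) x)%N.
  by apply: eq_bigr => b _; apply: eq_bigr => y _; rewrite Phi_pr.
have e2 : (\sum_b \sum_y (Phi F (pr a x) (pr b y) : nat) = \sum_b rs (blk F a b) x)%N.
  by apply: eq_bigr => b _; apply: eq_bigr => y _; rewrite Phi_pr.
have hE : has_edge (Phi F).
  case hno : (has_edge (Phi F)) => //.
  have z k l : Phi F k l = false.
    apply/negP => hkl; move: hno; rewrite /has_edge.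
    by have -> : [exists i, exists j, Phi F i j] by apply/existsP; exists k; apply/existsP; exists l.
  have s1 : (\sum_b cs (blk F a b) x = 0)%N.
    by rewrite -e1; apply: big1 => b _; apply: big1 => y _; rewrite z.
  have s2 : (\sum_b rs (blk F a b) x = 0)%N.
    by rewrite -e2; apply: big1 => b _; apply: big1 => y _; rewrite z.
  by move: hne; rewrite s1 s2.
rewrite hG hE /=; rewrite /asbool; case: excluded_middle_informative => // hs.
exfalso; apply: hs => hs.
move: hne; rewrite -e1 -e2 (graph_crit hG hE hs a x).
by rewrite eqxx.
Qed.

Theorem mainTheorem3 (p q : nat) (hp : (0 < p)%N) (hq : (0 < q)%N) :
  (\sum_(1 <= i < ((p.-1 * p.-2) %/ 2).+2)
      M_ p i * N_e q ^ i * N_s q ^ (p * p.-1 %/ 2 - i) * 2 ^ (p * q * q.-1 %/ 2)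
   <= L_e p q)%N.
Proof.
set K2 := ((p.-1 * p.-2) %/ 2).+2.
set c := fun i => (N_e q ^ i * N_s q ^ (p * p.-1 %/ 2 - i) * 2 ^ (p * q * q.-1 %/ 2))%N.
pose condM (i : nat) (W : 'M[bool]_p) := [&& is_graph W,
       (\sum_(a < p) \sum_(b < p) (W a b : nat) == 2 * i)%N &
       [exists a, (\sum_(b < p) (W a b : nat) == 1)%N]].
pose D := [set t : 'I_K2 * 'M[bool]_p * {ffun 'I_p * 'I_p -> 'M[bool]_q} |
   [&& (1 <= t.1.1)%N, condM t.1.1 t.1.2 & t.2 \in family (Fam q t.1.2)]].
have hcount : (\sum_(1 <= i < K2)
      M_ p i * N_e q ^ i * N_s q ^ (p * p.-1 %/ 2 - i) * 2 ^ (p * q * q.-1 %/ 2))%N = #|D|.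
  rewrite cardP sum_triple big_geq_mkord big_mkcond /=; apply: eq_bigr => i _.
  case: (ltnP 0 i) => hi /=; last by rewrite big1 // => H _; rewrite big1.
  rewrite /M_ cardP -[X in X = _]mulnA -[X in X = _]mulnA big_distrl /=; apply: eq_bigr => H _.
  rewrite -/(condM i H); case hc: (condM i H); last by rewrite mul0n big1.
  rewrite mul1n sum_mem.
  by case/and3P: hc => hg /eqP hs _; rewrite (card_FamH q hg hs) mulnA.
have hinj : {in D &, injective (fun t => Phi t.2)}.
  move=> [[i1 H1] F1] [[i2 H2] F2]; rewrite /D !inE /= => /and3P[_ hc1 hF1] /and3P[_ hc2 hF2] e.
  case/and3P: hc1 => hg1 /eqP hs1 _; case/and3P: hc2 => hg2 /eqP hs2 _.
  have [eF eH] := Phi_inj hg1 hg2 hF1 hF2 e.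
  subst F2 H2; congr (_, _, _); apply: val_inj => /=; lia.
have hsub : (fun t => Phi t.2) @: D \subset [set W : 'M[bool]_(p * q) | [&& is_graph W, has_edge W &
        asbool (~ @separable p q (norm_laplacian W))]].
  apply/subsetP => W /imsetP [[[i H] F] hD ->]; move: hD; rewrite /D !inE /= => /and3P[_ hc hF].
  case/and3P: hc => hg _ hex.
  by rewrite ?inE (entangled hg hex hF).
rewrite hcount -(card_in_imset hinj) /L_e.
exact: subset_leq_card hsub.
Qed.
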